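(* Let $\Gamma=(G,\sigma)$ be a signed graph with girth $g$ and let $C_g^\sigma$ be a shortest cycle of $\Gamma$. If $i_-(\Gamma)=i_-(C_g^\sigma)$, then $N_r(C_g^\sigma)=\emptyset$ for every integer $r\ge 2$.
   Context: A signed graph $\Gamma=(G,\sigma)$ is a simple graph $G$ with a sign function $\sigma:E(G)\to\{+,-\}$. Its adjacency matrix $A(\Gamma)$ has $(u,v)$-entry $\sigma(uv)$ if $uv\in E(G)$ and $0$ otherwise; $i_+(\Gamma)$, $i_-(\Gamma)$, $\eta(\Gamma)$ denote the numbers of positive, negative and zero eigenvalues of $A(\Gamma)$. A cycle $C_g^\sigma$ of $\Gamma$ is regarded as a signed graph with the restricted signs. The girth $g$ is the length of a shortest cycle. For a cycle $C$ of $\Gamma$ and a positive integer $r$, $N_r(C)$ denotes the set of vertices $v\in V(\Gamma)\setminus V(C)$ whose distance to $V(C)$ (the minimum over $x\in V(C)$ of the length of a shortest $v$–$x$ path) equals $r$. *)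

(* Defs.v *)
From HB Require Import structures.
From mathcomp Require Import all_boot all_order all_algebra all_field.
Set Implicit Arguments. Unset Strict Implicit. Unset Printing Implicit Defensive.
Import Order.TTheory GRing.Theory Num.Theory.
Local Open Scope ring_scope.

(* A signed graph on the finite vertex type T: a simple graph given by a
   symmetric irreflexive relation [e], together with a sign function [neg]
   ([neg x y = true] means the edge xy is negative), symmetric. *)
Definition signed_graph (T : finType) (e : rel T) (neg : T -> T -> bool) : Prop :=
  symmetric e /\ irreflexive e /\ (forall x y, neg x y = neg y x).

Definition sgn_val (T : finType) (neg : T -> T -> bool) (x y : T) : algC :=
  if neg x y then -1 else 1.

Definition adj_mx (T : finType) (e : rel T) (neg : T -> T -> bool)
  : 'M[algC]_#|T| :=
  \matrix_(i, j) (if e (enum_val i) (enum_val j)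
                  then sgn_val neg (enum_val i) (enum_val j) else 0).

(* The multiset of eigenvalues (roots of the characteristic polynomial,
   with multiplicity) of a square complex matrix. *)
Definition eigenvalues (m : nat) (M : 'M[algC]_m) : seq algC :=
  sval (closed_field_poly_normal (char_poly M)).

Definition n_neg (m : nat) (M : 'M[algC]_m) : nat :=
  count (fun z : algC => z < 0) (eigenvalues M).

Definition is_cycle (T : finType) (e : rel T) (c : seq T) : Prop :=
  [/\ uniq c, 3 <= size c & cycle e c]%N.

(* The cycle c regarded as a signed graph (its own vertices, its own edges,
   restricted signs): adjacency matrix indexed by positions on the cycle. *)
Definition cycle_adj_mx (T : finType) (neg : T -> T -> bool) (c : seq T)
  : 'M[algC]_(size c) :=
  \matrix_(i, j)
    (if (val j == (val i).+1 %% size c)%N || (val i == (val j).+1 %% size c)%N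
     then sgn_val neg (tnth (in_tuple c) i) (tnth (in_tuple c) j) else 0).

Definition dist_le (T : finType) (e : rel T) (k : nat) (v : T) (S : seq T) : Prop :=
  exists p : seq T, [/\ path e v p, (size p <= k)%N & last v p \in S].

Definition in_N (T : finType) (e : rel T) (r : nat) (c : seq T) (v : T) : Prop :=
  [/\ v \notin c, dist_le e r v c & ~ dist_le e r.-1 v c].

(* Main.v *)
Require Import Defs.
From HB Require Import structures.
From mathcomp Require Import all_boot all_order all_algebra all_field.
From mathcomp Require Import ring zify.
Set Implicit Arguments. Unset Strict Implicit. Unset Printing Implicit Defensive.

Section Graph.
Variables (T : finType) (e : rel T).
Hypotheses (esym : symmetric e) (eirr : irreflexive e).

Lemma chordless (c : seq T) : is_cycle e c ->
  (forall c', is_cycle e c' -> (size c <= size c')%N) ->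
  forall y z, y \in c -> z \in c -> e y z -> (z == next c y) || (y == next c z).
Proof.
move=> [uc hsz hcyc] hmin y z yc zc hyz.
case: (rot_to yc) => i q hrot.
have us : uniq (y :: q) by rewrite -hrot rot_uniq.
have cs : cycle e (y :: q) by rewrite -hrot rot_cycle.
have ss : size (y :: q) = size c by rewrite -hrot size_rot.
have zs : z \in y :: q by rewrite -hrot mem_rot.
rewrite -(next_rot i uc) -[next c z](next_rot i uc) hrot.
have zq : z \in q.
  by move: zs; rewrite inE => /orP [/eqP hz|//]; rewrite hz eirr in hyz.
have hk : (index z q < size q)%N by rewrite index_mem.
have hnz := nth_index y zq.
move: (us) => /= /andP [yq uq].
have zy : z != y by apply: contraNneq yq => <-.
case: (posnP (index z q)) => [k0 | kpos].
  apply/orP; left.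
  rewrite -[next_at y y y q]/(next (y :: q) y) next_nth mem_head /= eqxx.
  by rewrite -k0 hnz.
case: (ltngtP (index z q).+1 (size q)) => [hlt | | heq].
- exfalso.
  set k := index z q in hk hnz kpos hlt.
  have hc' : is_cycle e (y :: take k.+1 q).
    split.
    + rewrite /= take_uniq // andbT.
      by apply: contra yq; apply: mem_take.
    + by rewrite /= size_take hlt.
    + rewrite /= rcons_path (take_nth y hk) last_rcons hnz esym hyz andbT.
      rewrite -hnz -(take_nth y hk).
      apply: take_path.
      by move: cs; rewrite /= rcons_path => /andP [].
  have := hmin _ hc'.
  by rewrite -ss /= size_take hlt ltnS leqNgt hlt.
- by rewrite ltnNge hk.
- apply/orP; right.
  rewrite -[next_at z y y q]/(next (y :: q) z) next_nth zs /= (eq_sym y z) (negbTE zy) heq nth_default //.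
Qed.

Lemma next_nth_idx (c : seq T) x0 i : uniq c -> (i < size c)%N ->
  next c (nth x0 c i) = nth x0 c (i.+1 %% size c).
Proof.
move=> uc hi; rewrite next_nth mem_nth // index_uniq //.
case: c uc hi => [//|y q] uc hi /=.
case: (ltngtP i.+1 (size q).+1) => [hlt | hgt | heq].
- by rewrite modn_small //= (set_nth_default x0).
- by rewrite ltnS leqNgt hi in hgt.
- have -> : i = size q by move: heq => [].
  by rewrite modnn /= nth_default.
Qed.

Lemma find_pair (c : seq T) : forall p v, path e v p -> last v p \in c -> (2 <= size p)%N ->
  ~ dist_le e (size p).-1 v c ->
  exists x w, [/\ x \notin c, w \notin c, e x w & forall y, y \in c -> ~~ e x y].
Proof.
elim=> [//|a p IH] v /= /andP [hva hp] hl hs hnd.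
case: p IH hp hl hs hnd => [//|b p] IH hp hl hs hnd.
case: (leqP (size p) 0) => hp0.
  move: hp0; rewrite leqn0 => /nilP hp0; subst p.
  exists v, a; split => //.
  - by apply/negP => hv; apply: hnd; exists [::].
  - by apply/negP => hv; apply: hnd; exists [:: a]; rewrite /= hva.
  - move=> y hy; apply/negP => hvy; apply: hnd; exists [:: y]; split => //=.
    by rewrite hvy.
apply: (IH a) => //.
move=> [p' [hp' hs' hl']]; apply: hnd.
by exists (a :: p'); split => //=; rewrite hva.
Qed.

End Graph.

Import Order.TTheory GRing.Theory Num.Theory.
Local Open Scope ring_scope.
Local Open Scope sesquilinear_scope.
Lemma card_count (T : finType) (P : pred T) : #|[set i | P i]| = count P (enum T).
Proof. rewrite cardsE cardE -size_filter /enum_mem; congr size; rewrite -filter_predI; apply: eq_filter => x /=; by rewrite andbT. Qed.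

Lemma char_poly_similar n (A D P : 'M[algC]_n) : P \in unitmx ->
  A = invmx P *m D *m P -> char_poly A = char_poly D.
Proof.
move=> Pu ->; rewrite /char_poly /char_poly_mx.
set Pp := map_mx polyC P; set Pi := map_mx polyC (invmx P).
have PiP : Pi *m Pp = 1%:M by rewrite -map_mxM mulVmx // map_mx1.
have eX : 'X%:M = Pi *m 'X%:M *m Pp :> 'M[{poly algC}]_n.
  by rewrite mul_mx_scalar -scalemxAl PiP scalemx1.
rewrite !map_mxM -/Pi -/Pp.
rewrite [in LHS]eX -mulmxBl -mulmxBr !det_mulmx mulrAC -det_mulmx PiP det1 mul1r.
by [].
Qed.

Lemma n_neg_spectral n (A : 'M[algC]_n) : A \is hermsymmx ->
  n_neg A = #|[set i : 'I_n | spectral_diag A 0 i < 0]|.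
Proof.
move=> hA.
have eA := orthomx_spectralP (hermitian_normalmx hA).
have hc : char_poly A = \prod_(i < n) ('X - (spectral_diag A 0 i)%:P).
  rewrite (char_poly_similar (spectral_unit A) eA) char_poly_trig ?diag_mx_is_trig //.
  by apply: eq_bigr => i _; rewrite mxE eqxx mulr1n.
have hp : perm_eq (eigenvalues A) [seq spectral_diag A 0 i | i <- enum 'I_n].
  rewrite /eigenvalues; case: closed_field_poly_normal => r /= hr.
  apply: prod_XsubC_eq; rewrite big_map big_enum /= -hc.
  by rewrite [RHS]hr (monicP (char_poly_monic A)) scale1r.
by rewrite /n_neg (permP hp) count_map card_count.
Qed.

Definition bf n (A : 'M[algC]_n) (y1 y2 : 'rV[algC]_n) : algC := (y1 *m A *m y2^t*) 0 0.
Definition qf n (A : 'M[algC]_n) (y : 'rV[algC]_n) : algC := bf A y y.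

Lemma ctM m n p (M : 'M[algC]_(m, n)) (N : 'M[algC]_(n, p)) : (M *m N)^t* = N^t* *m M^t*.
Proof. by rewrite trmx_mul map_mxM. Qed.

Lemma bfDl n (A : 'M[algC]_n) y1 y2 y3 : bf A (y1 + y2) y3 = bf A y1 y3 + bf A y2 y3.
Proof. by rewrite /bf !mulmxDl mxE. Qed.
Lemma bfDr n (A : 'M[algC]_n) y1 y2 y3 : bf A y1 (y2 + y3) = bf A y1 y2 + bf A y1 y3.
Proof. by rewrite /bf linearD /= map_mxD mulmxDr mxE. Qed.
Lemma bfZl n (A : 'M[algC]_n) a y1 y2 : bf A (a *: y1) y2 = a * bf A y1 y2.
Proof. by rewrite /bf -!scalemxAl mxE. Qed.
Lemma bfZr n (A : 'M[algC]_n) a y1 y2 : bf A y1 (a *: y2) = a^* * bf A y1 y2.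
Proof. by rewrite /bf linearZ /= map_mxZ -scalemxAr mxE. Qed.
Lemma bf_sym n (A : 'M[algC]_n) y1 y2 : A^t* = A -> bf A y2 y1 = (bf A y1 y2)^*.
Proof.
move=> hA; rewrite /bf.
have -> : y2 *m A *m y1^t* = (y1 *m A *m y2^t*)^t*.
  by rewrite !ctM trmxCK hA mulmxA.
by rewrite !mxE.
Qed.
Lemma bf_delta n (A : 'M[algC]_n) p q : bf A (delta_mx 0 p) (delta_mx 0 q) = A p q.
Proof.
rewrite /bf mxE (bigD1 q) //= big1 ?addr0.
  rewrite !mxE !eqxx /= conjC1 mulr1 (bigD1 p) //= big1 ?addr0.
    by rewrite mxE !eqxx mul1r.
  by move=> i hi; rewrite mxE (negbTE hi) andbF mul0r.
by move=> i hi; rewrite !mxE (negbTE hi) andbF conjC0 mulr0.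
Qed.

Lemma qf_spectral n (A : 'M[algC]_n) y : A \is hermsymmx ->
  qf A y = \sum_i spectral_diag A 0 i *
     ((y *m (spectralmx A)^t*) 0 i * ((y *m (spectralmx A)^t*) 0 i)^*).
Proof.
move=> hA.
have eA := orthomx_spectralP (hermitian_normalmx hA).
rewrite invmx_unitary ?spectral_unitarymx // in eA.
rewrite /qf /bf {1}eA.
set P := spectralmx A; set d := spectral_diag A.
have -> : y *m (P^t* *m diag_mx d *m P) *m y^t* = (y *m P^t*) *m diag_mx d *m (y *m P^t*)^t*.
  by rewrite ctM trmxCK !mulmxA.
rewrite mxE; apply: eq_bigr => i _.
by rewrite mul_mx_diag !mxE; ring.
Qed.

Lemma diag_real n (A : 'M[algC]_n) i : A \is hermsymmx -> spectral_diag A 0 i \is Num.real.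
Proof. by move=> hA; have /mxOverP := hermitian_spectral_diag_real hA; apply. Qed.

Lemma neg_upper n (A : 'M[algC]_n) k (W : 'M[algC]_(k, n)) : A \is hermsymmx ->
  (forall c : 'rV_k, c != 0 -> qf A (c *m W) < 0) -> (k <= n_neg A)%N.
Proof.
move=> hA hW; rewrite n_neg_spectral //.
set P := spectralmx A; set d := spectral_diag A.
set S := [set i : 'I_n | d 0 i < 0].
pose Sel : 'M[algC]_(#|S|, n) := \matrix_(i, j) (j == enum_val i)%:R.
pose K := W *m P^t* *m Sel^T.
rewrite leqNgt; apply/negP => hlt.
have : kermx K != 0.
  rewrite -mxrank_eq0 mxrank_ker -lt0n subn_gt0.
  exact: leq_ltn_trans (rank_leq_col K) hlt.
rewrite -nz_row_eq0 => hnz.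
set c := nz_row (kermx K) in hnz.
have hcK : c *m K = 0 by apply/sub_kermxP; exact: nz_row_sub.
have h0 : 0 <= qf A (c *m W).
  rewrite qf_spectral //; apply: sumr_ge0 => j _.
  set u := c *m W *m P^t*.
  case: (boolP (j \in S)) => hj.
    have : (c *m K) 0 (enum_rank_in hj j) = 0 by rewrite hcK mxE.
    rewrite /K !mulmxA -/u mxE (bigD1 j) //= big1 ?addr0.
      by rewrite !mxE enum_rankK_in // eqxx mulr1 => ->; rewrite mul0r mulr0.
    by move=> l hl; rewrite !mxE enum_rankK_in // (negbTE hl) mulr0.
  apply: mulr_ge0; last exact: mul_conjC_ge0.
  move: hj; rewrite inE -/d => hj.
  by rewrite real_leNgt ?real0 ?diag_real.
by have := hW c hnz; rewrite (le_gtF h0).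
Qed.

Lemma rV_neq0 m (c : 'rV[algC]_m) : c != 0 -> exists i, c 0 i != 0.
Proof.
move=> hc; apply/existsP; apply: contraNT hc => /existsPn H.
by apply/eqP/rowP => i; rewrite mxE; move: (H i); rewrite negbK => /eqP.
Qed.

Lemma neg_lower n (A : 'M[algC]_n) : A \is hermsymmx ->
  exists W : 'M[algC]_(n_neg A, n), forall c : 'rV_(n_neg A), c != 0 -> qf A (c *m W) < 0.
Proof.
move=> hA; rewrite n_neg_spectral //.
set P := spectralmx A; set d := spectral_diag A.
set S := [set i : 'I_n | d 0 i < 0].
pose Sel : 'M[algC]_(#|S|, n) := \matrix_(i, j) (j == enum_val i)%:R.
exists (Sel *m P) => c hc.
have hPP : P *m P^t* = 1%:M by apply/unitarymxP; exact: spectral_unitarymx.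
rewrite qf_spectral // -/P -/d !mulmxA -(mulmxA _ P) hPP mulmx1.
have [i hi] := rV_neq0 hc.
have hu : forall j, (c *m Sel) 0 j = \sum_l c 0 l * (j == enum_val l)%:R.
  by move=> j; rewrite mxE; apply: eq_bigr => l _; rewrite mxE.
rewrite (bigD1 (enum_val i)) //=.
rewrite -[X in _ < X](addr0 0); apply: ltr_leD.
  have -> : (c *m Sel) 0 (enum_val i) = c 0 i.
    rewrite hu (bigD1 i) //= eqxx mulr1 big1 ?addr0 //.
    move=> l hl; rewrite eq_sym (inj_eq enum_val_inj) (negbTE hl) mulr0 //.
  have := enum_valP i; rewrite inE -/d => hd.
  by rewrite nmulr_rlt0 // mul_conjC_gt0.
rewrite -oppr_ge0 -sumrN; apply: sumr_ge0 => j _; rewrite oppr_ge0.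
case: (boolP (j \in S)) => hj.
  apply: mulr_le0_ge0; last exact: mul_conjC_ge0.
  by move: hj; rewrite inE => /ltW.
have -> : (c *m Sel) 0 j = 0.
  rewrite hu big1 // => l _.
  have : j != enum_val l by apply: contraNneq hj => ->; exact: enum_valP.
  by move/negbTE => ->; rewrite mulr0.
by rewrite mul0r mulr0.
Qed.

Lemma lift_neg n m (A : 'M[algC]_n) (B : 'M[algC]_m) (F : 'M[algC]_(m, n))
  (w x : 'I_n) (s : algC) k (W : 'M[algC]_(k, m)) :
  A^t* = A ->
  F *m A *m F^t* = B ->
  F *m A *m (delta_mx 0 x : 'rV[algC]_n)^t* = 0 ->
  A w w = 0 -> A x x = 0 -> A w x = s -> (s = 1 \/ s = -1) ->
  (forall c : 'rV_k, c != 0 -> qf B (c *m W) < 0) ->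
  exists W' : 'M[algC]_(k + 1, n), forall c : 'rV_(k + 1), c != 0 -> qf A (c *m W') < 0.
Proof.
move=> hA hB hx hww hxx hwx hs hW.
set ew : 'rV[algC]_n := delta_mx 0 w; set ex : 'rV[algC]_n := delta_mx 0 x.
have hsc : s^* = s by case: hs => ->; rewrite ?conjC1 ?rmorphN1.
exists (col_mx (W *m F *m (1%:M - s *: (A *m ew^t* *m ex))) (ew - s *: ex)) => c hc.
set c1 := lsubmx c; set a : algC := rsubmx c 0 0.
set z := c1 *m W *m F; set L := bf A z ew; set b := - s * (L + a).
have hL : z *m A *m ew^t* = L%:M by rewrite [LHS]mx11_scalar.
have -> : c *m col_mx (W *m F *m (1%:M - s *: (A *m ew^t* *m ex))) (ew - s *: ex)
   = z + a *: ew + b *: ex.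
  rewrite -[c]hsubmxK mul_row_col -/c1 (mx11_scalar (rsubmx c)) -/a mul_scalar_mx.
  rewrite !mulmxA mulmxBr mulmx1 -scalemxAr !mulmxA -/z hL mul_scalar_mx.
  by apply/rowP => j; rewrite !mxE /b; ring.
have hzz : qf A z = qf B (c1 *m W) by rewrite /qf /bf /z ctM -hB !mulmxA.
have hzx : bf A z ex = 0.
  rewrite /bf; have -> : z *m A *m ex^t* = (c1 *m W) *m (F *m A *m ex^t*) by rewrite !mulmxA.
  by rewrite hx mulmx0 mxE.
have hxz : bf A ex z = 0 by rewrite (bf_sym _ _ hA) hzx conjC0.
have hwz : bf A ew z = L^* by rewrite (bf_sym _ _ hA).
have hew : bf A ew ew = 0 by rewrite bf_delta.
have hexx : bf A ex ex = 0 by rewrite bf_delta.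
have hewx : bf A ew ex = s by rewrite bf_delta.
have hexw : bf A ex ew = s by rewrite (bf_sym _ _ hA) hewx.
have hb : b^* = - s * (L^* + a^*).
  by rewrite /b rmorphM rmorphN rmorphD -[in RHS]hsc.
have hq : qf A (z + a *: ew + b *: ex) = qf B (c1 *m W) - (a * a^*) *+ 2.
  rewrite /qf !bfDl !bfDr !bfZl !bfZr -/L hzx hxz hwz hew hexx hewx hexw hb.
  rewrite -/(qf A z) hzz /b.
  rewrite -/(qf B _); case: hs => ->; ring.
rewrite hq.
case: (eqVneq c1 0) => hc1.
  have ha : a != 0.
    apply: contraNneq hc => ha; rewrite -[c]hsubmxK -/c1 hc1 (mx11_scalar (rsubmx c)) -/a ha.
    apply/eqP/matrixP => i j; rewrite !mxE; case: splitP => ? ?; by rewrite !mxE // ?mulr0n ?mul0rn.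
  rewrite hc1 mul0mx /qf /bf !mul0mx mxE sub0r oppr_lt0 pmulrn_lgt0 //.
  by rewrite mul_conjC_gt0.
rewrite -[X in _ < X](addr0 0); apply: ltr_leD; first exact: hW.
by rewrite oppr_le0 mulrn_wge0 // mul_conjC_ge0.
Qed.

Lemma herm_of n (A : 'M[algC]_n) : A^t* = A -> A \is hermsymmx.
Proof. by move=> h; rewrite qualifE /= expr0 scale1r h. Qed.

Lemma sgn_conj (T : finType) (neg : T -> T -> bool) a b : (sgn_val neg a b)^* = sgn_val neg a b.
Proof. by rewrite /sgn_val; case: neg; rewrite ?conjC1 ?rmorphN1. Qed.

Lemma sumL (T : finType) (t : T) (g : 'I_#|T| -> algC) :
  \sum_p (enum_val p == t)%:R * g p = g (enum_rank t).
Proof.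
rewrite (bigD1 (enum_rank t)) //= enum_rankK eqxx mul1r big1 ?addr0 // => p hp.
rewrite (_ : (enum_val p == t) = false) ?mul0r //; apply/negbTE.
by apply: contra hp => /eqP <-; rewrite enum_valK.
Qed.

Lemma sumR (T : finType) (t : T) (g : 'I_#|T| -> algC) :
  \sum_p g p * ((enum_val p == t)%:R)^* = g (enum_rank t).
Proof.
rewrite -[RHS](sumL t g); apply: eq_bigr => p _.
by rewrite conjC_nat mulrC.
Qed.

Theorem lemma2p7 (T : finType) (e : rel T) (neg : T -> T -> bool) (c : seq T) :
  signed_graph e neg ->
  is_cycle e c ->
  (forall c' : seq T, is_cycle e c' -> (size c <= size c')%N) ->
  n_neg (adj_mx e neg) = n_neg (cycle_adj_mx neg c) ->
  forall r : nat, (2 <= r)%N -> forall v : T, ~ in_N e r c v.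
Proof.
move=> [esym [eirr nsym]] hcyc hmin hneg r hr v [vnc [p [hp hsz hl]] hnd].
have hsp : (r <= size p)%N.
  rewrite leqNgt; apply/negP => hlt; apply: hnd; exists p; split => //; lia.
have hnd' : ~ dist_le e (size p).-1 v c.
  move=> [p' [hp' hs' hl']]; apply: hnd; exists p'; split => //; lia.
have [x [w [xc wc hxw hxc]]] := find_pair hp hl (leq_trans hr hsp) hnd'.
move: hcyc => hcyc'; case: (hcyc') => uc hsz3 hcyc.
set A := adj_mx e neg; set B := cycle_adj_mx neg c.
have hA : A^t* = A.
  apply/matrixP => i j; rewrite !mxE /sgn_val (esym (enum_val j)) (nsym (enum_val j)).
  by case: (e (enum_val i) (enum_val j)); case: (neg (enum_val i) (enum_val j)); rewrite ?conjC1 ?rmorphN1 ?conjC0.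
have hB : B^t* = B.
  apply/matrixP => i j; rewrite !mxE /sgn_val (nsym (tnth _ j)) orbC.
  by case: (_ || _); case: (neg _ _); rewrite ?conjC1 ?rmorphN1 ?conjC0.
have adj : forall i j : 'I_(size c), e (tnth (in_tuple c) i) (tnth (in_tuple c) j) =
    (val j == (val i).+1 %% size c)%N || (val i == (val j).+1 %% size c)%N.
  move=> i j; rewrite !(tnth_nth x) /=.
  have m0 : (0 < size c)%N by lia.
  rewrite -(nth_uniq x (ltn_ord j) (ltn_pmod _ m0) uc).
  rewrite -(nth_uniq x (ltn_ord i) (ltn_pmod _ m0) uc).
  rewrite -!next_nth_idx //.
  apply/idP/idP.
    by apply: chordless => //; apply: mem_nth.
  case/orP => /eqP ->.
    by apply: next_cycle hcyc _; apply: mem_nth.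
  by rewrite esym; apply: next_cycle hcyc _; apply: mem_nth.
pose F : 'M[algC]_(size c, #|T|) := \matrix_(i, j) ((enum_val j == tnth (in_tuple c) i)%:R).
have FA : F *m A = \matrix_(i, q) A (enum_rank (tnth (in_tuple c) i)) q.
  apply/matrixP => i q; rewrite [RHS]mxE -(sumL (tnth (in_tuple c) i) (fun p => A p q)) [LHS]mxE.
  by apply: eq_bigr => p0 _; rewrite mxE.
have hFAF : F *m A *m F^t* = B.
  apply/matrixP => i j; rewrite FA mxE.
  rewrite -[X in X = _]/(\sum_q _ * _).
  transitivity (A (enum_rank (tnth (in_tuple c) i)) (enum_rank (tnth (in_tuple c) j))).
    rewrite -(sumR (tnth (in_tuple c) j)); apply: eq_bigr => q _; by rewrite !mxE.
  by rewrite /A /B !mxE !enum_rankK adj.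
set wi := enum_rank w; set xi := enum_rank x.
have hFx : F *m A *m (delta_mx 0 xi : 'rV[algC]_#|T|)^t* = 0.
  apply/matrixP => i j; rewrite FA mxE (bigD1 xi) //= big1 ?addr0.
    rewrite !mxE !enum_rankK (ord1 j) !eqxx /=.
    have -> : e (tnth (in_tuple c) i) x = false.
      apply/negbTE; rewrite esym; apply: hxc; exact: mem_tnth.
    by rewrite mul0r.
  by move=> q hq; rewrite !mxE (negbTE hq) andbF conjC0 mulr0.
have hww : A wi wi = 0 by rewrite mxE enum_rankK eirr.
have hxx : A xi xi = 0 by rewrite mxE enum_rankK eirr.
have hwx : A wi xi = sgn_val neg w x by rewrite mxE !enum_rankK esym hxw.
have hs : sgn_val neg w x = 1 \/ sgn_val neg w x = -1.
  by rewrite /sgn_val; case: (neg w x); [right|left].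
have [W hW] := neg_lower (herm_of hB).
have [W' hW'] := lift_neg hA hFAF hFx hww hxx hwx hs hW.
have := neg_upper (herm_of hA) hW'.
by rewrite -/A -/B hneg addn1 ltnn.
Qed.
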